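(* Let $K$ be a field of characteristic $p>0$ and $A^*$ a graded Hopf algebra over $K$ with a decreasing filtration $\mathfrak F=(F_iA^* )_{i\in\mathbb Z}$ satisfying (E1), (E2), (E3), (E4), (E6), (E7), (E8). A left $A^*$-module $M^*$ with structure map $\alpha\colon A^*\otimes M^*\to M^*$ is unstable with respect to $\mathfrak F$ if and only if $\alpha\big((F_{2i+\varepsilon}A^* )^{2i(p-1)+\varepsilon}\otimes M^k\big)=\{0\}$ for all $i\in\mathbb Z$, $\varepsilon\in\{0,1\}$ and $k\in\mathbb Z$ with $k<2i+\varepsilon$.
   Context: Let $A^*$ be a graded Hopf algebra over a field $K$ of characteristic $p$, with product $\mu$ and a decreasing filtration $\mathfrak F=(F_iA^* )_{i\in\mathbb Z}$ by graded subspaces. A left $A^*$-module $M^*$ with structure map $\alpha$ is unstable if $\alpha(F_{n+1}A^*\otimes M^n)=\{0\}$ for all $n\in\mathbb Z$. Put $E_i^jA^*=(F_iA^* )^j/(F_{i+1}A^* )^j$. Conditions: (E1) $F_iA^*=A^*$ for $i\le0$; (E2) $\bigcap_iF_iA^*=\{0\}$; (E3) each $F_iA^*$ is a left ideal; (E4) $\mu(F_iA^*\otimes A^j)\subset F_{i-j}A^*$ for all $i,j$; (E6) for $i,k\in\mathbb Z$, $\varepsilon\in\{0,1\}$, $E_{2i+\varepsilon}^kA^*=\{0\}$ if $k<2i(p-1)+\varepsilon$ or $2i+\varepsilon+k\not\equiv0,2\pmod{2p}$; (E7) $\dim E_{2i+\varepsilon}^{2i(p-1)+\varepsilon}A^*=1$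 for $i\ge0$, $\varepsilon\in\{0,1\}$; (E8) for all integers $i,j\ge0$ and $\varepsilon\in\{0,1\}$, the map $\tilde\mu_{2i+\varepsilon}^{2i(p-1)+\varepsilon,j}\colon E_{2i+\varepsilon}^{2i(p-1)+\varepsilon}A^*\otimes(A^*/F_{2i-j+\varepsilon+1}A^* )^j\to E_{2i-j+\varepsilon}^{2i(p-1)+j+\varepsilon}A^*$, $[a]\otimes[b]\mapsto[ab]$ (well defined by (E3),(E4)), is an isomorphism. *)

(* Defs.v *)
From HB Require Import structures.
From mathcomp Require Import all_boot all_order all_algebra.
Set Implicit Arguments. Unset Strict Implicit. Unset Printing Implicit Defensive.
Import Order.TTheory GRing.Theory Num.Theory.
Local Open Scope ring_scope.

Definition subspace (K : fieldType) (V : lmodType K) (P : V -> Prop) : Prop :=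
  P 0 /\ forall (c : K) (u v : V), P u -> P v -> P (c *: u + v).

Definition graded_vs (K : fieldType) (V : lmodType K) (G : int -> V -> Prop) :
  Prop :=
  [/\ forall j, subspace (G j),
      forall v : V, exists (s : seq int) (f : int -> V),
        (forall j, G j (f j)) /\ v = \sum_(j <- s) f j
    & forall (s : seq int) (f : int -> V), uniq s -> (forall j, G j (f j)) ->
        \sum_(j <- s) f j = 0 -> forall j, j \in s -> f j = 0].

Definition graded_alg (K : fieldType) (A : algType K) (G : int -> A -> Prop) :
  Prop :=
  [/\ graded_vs G, G 0 1
    & forall (j k : int) (a b : A), G j a -> G k b -> G (j + k) (a * b)].

Definition graded_filtration (K : fieldType) (A : algType K)
  (G : int -> A -> Prop) (F : int -> A -> Prop) : Prop :=
  [/\ forall i, subspace (F i),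
      forall i a, F (i + 1) a -> F i a
    & forall i a, F i a -> exists (s : seq int) (f : int -> A),
        (forall j, G j (f j) /\ F i (f j)) /\ a = \sum_(j <- s) f j].

(** E_i^k A = (F_i A)^k / (F_{i+1} A)^k is zero. *)
Definition E_zero (K : fieldType) (A : algType K)
  (G F : int -> A -> Prop) (i k : int) : Prop :=
  forall a, F i a -> G k a -> F (i + 1) a.

(** dim E_i^k A = 1: there is g in (F_i A)^k whose class is nonzero and spans. *)
Definition E_dim1 (K : fieldType) (A : algType K)
  (G F : int -> A -> Prop) (i k : int) : Prop :=
  exists g, [/\ F i g, G k g, ~ F (i + 1) g &
    forall a, F i a -> G k a -> exists c : K, F (i + 1) (a - c *: g)].

(** (E8) for given i, j >= 0 and eps, with s = 2i+eps, d = 2i(p-1)+eps: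
    the map E_s^d (x) (A/F_{s-j+1})^j -> E_{s-j}^{d+j}, [a](x)[b] |-> [ab]
    is an isomorphism.  Since E_s^d is one-dimensional (E7), spanned by the
    class of any g in (F_s A)^d \ F_{s+1}, this says that for such g the map
    [b] |-> [g b] from (A/F_{s-j+1})^j to E_{s-j}^{d+j} is injective and
    surjective. *)
Definition E8_iso (K : fieldType) (A : algType K) (p : nat)
  (G F : int -> A -> Prop) (i j e : int) : Prop :=
  let s := 2 * i + e in
  let d := 2 * i * (p%:Z - 1) + e in
  forall g, F s g -> G d g -> ~ F (s + 1) g ->
    (forall b, G j b -> F (s - j + 1) (g * b) -> F (s - j + 1) b) /\
    (forall x, F (s - j) x -> G (d + j) x ->
       exists b, G j b /\ F (s - j + 1) (x - g * b)).

Definition E1 (K : fieldType) (A : algType K) (F : int -> A -> Prop) : Prop :=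
  forall i a, i <= 0 -> F i a.
Definition E2 (K : fieldType) (A : algType K) (F : int -> A -> Prop) : Prop :=
  forall a, (forall i, F i a) -> a = 0.
Definition E3 (K : fieldType) (A : algType K) (F : int -> A -> Prop) : Prop :=
  forall i (a x : A), F i x -> F i (a * x).
Definition E4 (K : fieldType) (A : algType K) (G F : int -> A -> Prop) : Prop :=
  forall i j (a b : A), F i a -> G j b -> F (i - j) (a * b).
Definition E6 (K : fieldType) (A : algType K) (p : nat)
  (G F : int -> A -> Prop) : Prop :=
  forall i k e : int, e \in [:: 0; 1] ->
    (k < 2 * i * (p%:Z - 1) + e \/
     (((2 * i + e + k) %% (2 * p%:Z))%Z != 0 /\
      ((2 * i + e + k) %% (2 * p%:Z))%Z != 2)) ->
    E_zero G F (2 * i + e) k.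
Definition E7 (K : fieldType) (A : algType K) (p : nat)
  (G F : int -> A -> Prop) : Prop :=
  forall i e : int, 0 <= i -> e \in [:: 0; 1] ->
    E_dim1 G F (2 * i + e) (2 * i * (p%:Z - 1) + e).
Definition E8 (K : fieldType) (A : algType K) (p : nat)
  (G F : int -> A -> Prop) : Prop :=
  forall i j e : int, 0 <= i -> 0 <= j -> e \in [:: 0; 1] ->
    E8_iso p G F i j e.

(** A graded left A-module (M, GM) with structure map alpha, given as a
    bilinear action [act] (alpha(a (x) m) = act a m). *)
Definition graded_module (K : fieldType) (A : algType K) (G : int -> A -> Prop)
  (M : lmodType K) (GM : int -> M -> Prop) (act : A -> M -> M) : Prop :=
  graded_vs GM /\
  (forall (c : K) (a b : A) (m : M), act (c *: a + b) m = c *: act a m + act b m) /\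
  (forall (c : K) (a : A) (m n : M), act a (c *: m + n) = c *: act a m + act a n) /\
  (forall m, act 1 m = m) /\
  (forall (a b : A) (m : M), act (a * b) m = act a (act b m)) /\
  (forall (j k : int) (a : A) (m : M), G j a -> GM k m -> GM (j + k) (act a m)).

Definition unstable (K : fieldType) (A : algType K) (F : int -> A -> Prop)
  (M : lmodType K) (GM : int -> M -> Prop) (act : A -> M -> M) : Prop :=
  forall (n : int) (a : A) (m : M), F (n + 1) a -> GM n m -> act a m = 0.

(* Main.v *)
Require Import Defs.
From Stdlib Require Import ZArith Lia.
From HB Require Import structures.
From mathcomp Require Import all_boot all_order all_algebra.
Import Order.TTheory GRing.Theory Num.Theory.
Local Open Scope ring_scope.

Definition zZ (x : int) : Z :=
  match x with Posz n => Z.of_nat n | Negz n => Z.sub (Z.opp (Z.of_nat n)) (Z.of_nat 1) end.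

Lemma zZ_nat n : zZ (Posz n) = Z.of_nat n. Proof. by []. Qed.

Lemma zZ_natr n : zZ (n%:R) = Z.of_nat n. Proof. by rewrite natz. Qed.

Lemma int_repr (x : int) : exists a b : nat, x = a%:Z - b%:Z.
Proof.
case: x => n; first by exists n, 0%N; rewrite subr0.
by exists 0%N, n.+1; rewrite NegzE sub0r.
Qed.

Lemma zZ_sub (a b : nat) : zZ (a%:Z - b%:Z) = Z.sub (Z.of_nat a) (Z.of_nat b).
Proof.
case: (leqP b a) => hab.
  rewrite subzn // zZ_nat. move/ssrnat.leP: hab => hab. rewrite -minusE. lia.
have -> : a%:Z - b%:Z = Negz (b - a)%N.-1.
  rewrite NegzE. have -> : ((b - a)%N.-1).+1 = (b - a)%N.
    by rewrite prednK // subn_gt0.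
  by rewrite -subzn ?opprB // ltnW.
rewrite /zZ. move/ssrnat.ltP: hab => hab.
rewrite (_ : ((b - a)%N.-1 = (b - a - 1)%N)); last by rewrite subn1.
rewrite -!minusE; lia.
Qed.

Lemma zZD x y : zZ (x + y) = Z.add (zZ x) (zZ y).
Proof.
have [a [b ->]] := int_repr x; have [c [d ->]] := int_repr y.
have -> : a%:Z - b%:Z + (c%:Z - d%:Z) = (a + c)%N%:Z - (b + d)%N%:Z.
  by rewrite !PoszD addrACA opprD.
rewrite !zZ_sub !Nat2Z.inj_add; lia.
Qed.

Lemma zZN x : zZ (- x) = Z.opp (zZ x).
Proof.
have [a [b ->]] := int_repr x. rewrite opprB !zZ_sub; lia.
Qed.

Lemma zZB x y : zZ (x - y) = Z.sub (zZ x) (zZ y).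
Proof. rewrite zZD zZN; lia. Qed.

Lemma zZM x y : zZ (x * y) = Z.mul (zZ x) (zZ y).
Proof.
have [a [b ->]] := int_repr x; have [c [d ->]] := int_repr y.
have -> : (a%:Z - b%:Z) * (c%:Z - d%:Z) = (a * c + b * d)%N%:Z - (a * d + b * c)%N%:Z.
  rewrite !PoszD !PoszM mulrBl !mulrBr opprB opprD addrA.
  rewrite -[RHS]addrA [X in _ = _ + X]addrC !addrA. 
  by rewrite addrAC.
rewrite !zZ_sub !Nat2Z.inj_add !Nat2Z.inj_mul; lia.
Qed.

Lemma zZ_inj x y : zZ x = zZ y -> x = y.
Proof.
move=> h. apply/eqP; rewrite -subr_eq0; apply/eqP.
have [a [b E]] := int_repr (x - y).
have : zZ (x - y) = Z.of_nat 0 by rewrite zZD zZN h; lia.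
rewrite E zZ_sub => h2. have : a = b by lia. by move->; rewrite subrr.
Qed.

Lemma zZ_le x y : (x <= y) <-> Z.le (zZ x) (zZ y).
Proof.
rewrite -subr_ge0.
have [a [b E]] := int_repr (y - x).
have h : zZ (y - x) = Z.sub (Z.of_nat a) (Z.of_nat b) by rewrite E zZ_sub.
rewrite zZD zZN in h. rewrite E subr_ge0 lez_nat. split.
  move/ssrnat.leP; lia.
move=> H; apply/ssrnat.leP; lia.
Qed.

Lemma zZ_lt x y : (x < y) <-> Z.lt (zZ x) (zZ y).
Proof.
rewrite -lezD1 zZ_le zZD. simpl. lia.
Qed.

Lemma zZ_eq x y : x = y <-> zZ x = zZ y.
Proof. split; [by move->|exact: zZ_inj]. Qed.

Lemma zZ0 : zZ 0 = Z0. Proof. by []. Qed.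
Lemma zZ1 : zZ 1 = Zpos xH. Proof. by []. Qed.

Ltac zpush := repeat (match goal with H : context[zZ _] |- _ => revert H end);
  do 5 (rewrite ?zZ_natr ?zZ0 ?zZ1 ?zZ_nat ?zZD ?zZN ?zZM); intros.

Ltac zconv0 := repeat match goal with
 | H : is_true (@Order.le _ _ _ _) |- _ => apply zZ_le in H
 | H : is_true (@Order.lt _ _ _ _) |- _ => apply zZ_lt in H
 | H : @eq int _ _ |- _ => apply zZ_eq in H
 end.

Ltac zconv := zconv0.
Ltac zl := first [apply/zZ_le | apply/zZ_lt | apply/zZ_eq]; zconv; zpush; lia.

Lemma double0 (V : zmodType) (x : V) : x = x + x -> x = 0.
Proof. move=> h. apply: (@addrI _ x). by rewrite addr0 -h. Qed.

Lemma in01 (e : int) : e \in [:: 0; 1] <-> (e = 0 \/ e = 1).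
Proof.
rewrite !inE; split; first by case/orP => /eqP; auto.
by case=> ->; rewrite eqxx ?orbT.
Qed.

Lemma ar_dec (t : int) : exists i e : int, (e = 0 \/ e = 1) /\ t = 2 * i + e.
Proof.
exists (t %/ 2)%Z, (t %% 2)%Z.
have h0 := @modz_ge0 t 2 isT. have h1 := @ltz_pmod t 2 isT.
have h := divz_eq t 2. move: h0 h1 h.
set r := (t %% 2)%Z; set q := (t %/ 2)%Z => h0 h1 h.
split; last by rewrite {1}h mulrC.
clearbody r q. apply zZ_le in h0. apply zZ_lt in h1. zpush.
have : zZ r = Z0 \/ zZ r = Zpos xH by lia.
by case => hr; [left|right]; apply/zZ_eq.
Qed.

Lemma exists_bound (j : int) : exists N : nat, j < N%:Z.
Proof.
have [a [b ->]] := int_repr j. exists a.+1. apply/zZ_lt. rewrite zZ_sub zZ_nat. lia.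
Qed.

Lemma ar_vanish (p : nat) (i e j : int) : (2 <= p)%N -> (e = 0 \/ e = 1) ->
  0 <= 2 * i + e -> j < 2 * i + e -> j < 2 * i * (p%:Z - 1) + e.
Proof.
move/ssrnat.leP => hp he h1 h2. apply/zZ_lt. apply zZ_le in h1. apply zZ_lt in h2.
have he' : zZ e = Z0 \/ zZ e = Zpos xH by case: he => ->; [left|right].
zpush. nia.
Qed.

Lemma ar_main (p : nat) (i' e' i e j : int) : (2 <= p)%N ->
  (e' = 0 \/ e' = 1) -> (e = 0 \/ e = 1) -> 1 <= 2 * i' + e' ->
  2 * i' * (p%:Z - 1) + e' <= j ->
  2 * i' + e' + j = i * (2 * p%:Z) + 2 * e ->
  [/\ 0 <= i, 0 <= 2 * i + e - (2 * i' + e'),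
      2 * i + e - (2 * i + e - (2 * i' + e')) = 2 * i' + e' &
      2 * i * (p%:Z - 1) + e + (2 * i + e - (2 * i' + e')) = j].
Proof.
move/ssrnat.leP => hp he' he.
case: he' => ->; case: he => -> h1 h2 h3;
apply zZ_le in h1; apply zZ_le in h2; apply zZ_eq in h3;
(split; [apply/zZ_le|apply/zZ_le|apply/zZ_eq|apply/zZ_eq]); zpush; nia.
Qed.

Theorem proposition3p5 (K : fieldType) (p : nat) (A : algType K)
  (G F : int -> A -> Prop)
  (hp : prime p) (hchar : p \in [pchar K])
  (hA : graded_alg G) (hF : graded_filtration G F)
  (hE1 : E1 F) (hE2 : E2 F) (hE3 : E3 F) (hE4 : E4 G F)
  (hE6 : E6 p G F) (hE7 : E7 p G F) (hE8 : E8 p G F)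
  (M : lmodType K) (GM : int -> M -> Prop) (act : A -> M -> M)
  (hM : graded_module G GM act) :
  unstable F GM act <->
  (forall (i : int) (e : int) (k : int), e \in [:: 0; 1] -> k < 2 * i + e ->
     forall (a : A) (m : M),
       F (2 * i + e) a -> G (2 * i * (p%:Z - 1) + e) a -> GM k m ->
       act a m = 0).
Proof.
case: hA => hGvs hG1 hGmul.
case: hF => hFsub hFdec hFdecomp.
case: hM => hMvs [hactl [hactr [hact1 [hactM hactG]]]].
have hGsub : forall j, subspace (G j) by case: hGvs.
have p2 : (2 <= p)%N := prime_gt1 hp.
have act0 : forall m, act 0 m = 0.
  move=> m; apply: double0. by move: (hactl 1 0 0 m); rewrite !scale1r addr0.
have actD : forall a b m, act (a + b) m = act a m + act b m.
  by move=> a b m; move: (hactl 1 a b m); rewrite !scale1r.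
have actm0 : forall a, act a 0 = 0.
  move=> a; apply: double0. by move: (hactr 1 a 0 0); rewrite !scale1r addr0.
have actsum : forall (s : seq int) (f : int -> A) m,
    act (\sum_(j <- s) f j) m = \sum_(j <- s) act (f j) m.
  move=> s f m; elim: s => [|x s IH]; first by rewrite !big_nil act0.
  by rewrite !big_cons actD IH.
have Fanti : forall i i' a, i' <= i -> F i a -> F i' a.
  move=> i i' a h.
  have [k ->] : exists k : nat, i = i' + k%:Z.
    move: h; rewrite -subr_ge0; case E: (i - i') => [k|k] // _.
    by exists k; rewrite -E addrC subrK.
  elim: k => [|k IH]; first by rewrite addr0.
  move=> Hk; apply: IH; apply: hFdec.
  have -> : i' + k%:Z + 1 = i' + k.+1%:Z by apply/zZ_eq; zpush; lia.
  exact: Hk.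
split.
  move=> Hun i e k he hk a m hFa hGa hm. apply: (Hun k) => //.
  apply: Fanti hFa. by rewrite lezD1.
move=> H n a m hFa hm.
case: (leP 0 n) => hn; last first.
  have m0 : m = 0.
    rewrite -(hact1 m). apply: (H 0 0 n) => //.
    - by apply: hE1; rewrite mulr0 addr0.
    - by rewrite mulr0 mul0r addr0.
  by rewrite m0 actm0.
have [s [f [hf ->]]] := hFdecomp _ _ hFa.
rewrite actsum big1 // => j _.
have [hGb hFb] := hf j.
move: (f j) hGb hFb => {f hf hFa} b hGb hFb.
have [N hN] := exists_bound j.
have vanish : forall t b', N%:Z <= t -> F t b' -> G j b' -> F (t + 1) b'.
  move=> t b' ht hF' hG'. have [i' [e' [he' ht']]] := ar_dec t.
  rewrite ht' in hF' ht *.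
  apply: (hE6 i' j e') => //; first by rewrite in01.
  left. apply: ar_vanish => //; zl.
have zero_b : forall t b', N%:Z <= t -> F t b' -> G j b' -> b' = 0.
  move=> t b' ht hF' hG'. apply: hE2 => i.
  have up : forall k : nat, F (t + k%:Z) b'.
    elim=> [|k IH]; first by rewrite addr0.
    have -> : t + k.+1%:Z = t + k%:Z + 1 by zl.
    apply: vanish => //. zl.
  have [K0 hK] := exists_bound (i - t).
  apply: (Fanti (t + K0%:Z)) => //. zl.
have key : forall t : nat, forall sg b', 1 <= sg -> n + 1 <= sg ->
    N%:Z <= sg + t%:Z -> F sg b' -> G j b' -> act b' m = 0.
  elim=> [|t IH] sg b' h1 h2 h3 hF' hG'.
    rewrite (zero_b sg b') ?act0 //. by rewrite addr0 in h3.
  have [i' [e' [he' hsg]]] := ar_dec sg. subst sg.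
  set c := ((2 * i' + e' + j) %% (2 * p%:Z))%Z.
  case: (boolP ((j < 2 * i' * (p%:Z - 1) + e') || ((c != 0) && (c != 2)))) => hcase.
    apply: (IH (2 * i' + e' + 1) b'); try zl.
    apply: (hE6 i' j e') => //; first by rewrite in01.
    case/orP: hcase => [h|/andP [h h']]; [left | right; split] => //.
    exact: hG'.
  move: hcase; rewrite negb_or negb_and !negbK -leNgt => /andP [hd hc].
  have [e [he hce]] : exists e : int, (e = 0 \/ e = 1) /\ c = 2 * e.
    case/orP: hc => /eqP ->; [exists 0 | exists 1]; split; auto; by rewrite ?mulr0 ?mulr1.
  set i := ((2 * i' + e' + j) %/ (2 * p%:Z))%Z.
  have hdiv := divz_eq (2 * i' + e' + j) (2 * p%:Z).
  rewrite -/c -/i hce in hdiv.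
  have [hi hj' hs hd'] := @ar_main p _ _ _ _ _ p2 he' he h1 hd hdiv.
  have hein : e \in [:: 0; 1] by rewrite in01.
  have [g [hFg hGg hnFg _]] := hE7 i e hi hein.
  have [_ hsurj] := hE8 i (2 * i + e - (2 * i' + e')) e hi hj' hein g hFg hGg hnFg.
  have [b'' [hGb'' hFr]] := hsurj b' (ltac:(by rewrite hs)) (ltac:(by rewrite hd')).
  have hGgb : G j (g * b'') by rewrite -hd'; exact: hGmul.
  have e1 : act (b' - g * b'') m = 0.
    apply: (IH (2 * i' + e' + 1)); try zl.
      by rewrite hs in hFr.
    have := (hGsub j).2 (-1) _ _ hGgb hG'. by rewrite scaleN1r addrC.
  have e2 : act (g * b'') m = 0.
    rewrite hactM. apply: (H i e (2 * i + e - (2 * i' + e') + n) hein _ g) => //.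
      zl.
    exact: hactG.
  by rewrite -(subrK (g * b'') b') actD e1 e2 addr0.
apply: (key N (n + 1) b) => //; zl.
Qed.
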